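(* Let $A=\mathbb{Z}_{2^{m_1}}\times \mathbb{Z}_{2^{m_2}}\times\cdots\times\mathbb{Z}_{2^{m_k}}\times A_{2'}$, where $k\ge 1$, $m_i\ge 1$ for each $1\le i\le k$, and $A_{2'}$ is a finite abelian group of odd order. Let $H$ be a subgroup of $A$. Then $H$ is a subgroup perfect code of $A$ if and only if either $H$ is a subgroup isomorphic to $$\mathbb{Z}_{2^{m_1-1}}\times \mathbb{Z}_{2^{m_2-1}}\times\cdots\times\mathbb{Z}_{2^{m_k-1}}\times A_{2'},$$ or $H$ contains an element that is not a square in $A$.
   Context: All groups are finite abelian, written additively with identity $0$. An element $x$ of $A$ is a square if $x=2y$ for some $y\in A$; a subset of $A$ is square-free if it contains no squares. For a square-free subset $T\subseteq A$, the Cayley sum graph $\mathrm{CayS}(A,T)$ is the simple graph with vertex set $A$ in which two distinct vertices $x,y$ are adjacent iff $x+y\in T$. A subset $C$ of the vertex set of a graph is a perfect code if every vertex is at distance at most one from exactly one vertex of $C$. A subgroup $H$ of $A$ is a subgroup perfect code of $A$ if $H$ is a perfect code of $\mathrm{CayS}(A,T)$ for some square-free subset $T\subseteq A$ (the empty set allowed). *)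

(* Defs.v *)
(* Finite abelian groups are rendered as (abelian) subgroups
   of a finGroupType; the group law is written multiplicatively (x * y for the
   paper's x + y, 1 for 0, y * y for 2y). *)
From mathcomp Require Import all_boot all_order all_fingroup all_solvable.
Set Implicit Arguments. Unset Strict Implicit. Unset Printing Implicit Defensive.

Local Open Scope group_scope.

Section SumGraph.
Variable gT : finGroupType.

Definition is_square (A : {set gT}) (x : gT) : bool :=
  [exists y in A, x == y * y].

Definition square_free (A T : {set gT}) : bool :=
  [forall x in T, ~~ is_square A x].

Definition cays_adj (T : {set gT}) (x y : gT) : bool :=
  (x != y) && (x * y \in T).

Definition perfect_code (A T C : {set gT}) : Prop :=
  C \subset A /\
  forall v, v \in A -> #|[set c in C | (c == v) || cays_adj T v c]| = 1%N.

Definition subgroup_perfect_code (A H : {set gT}) : Prop :=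
  exists T : {set gT}, [/\ T \subset A, square_free A T & perfect_code A T H].

End SumGraph.

(* Main.v *)
Require Import Defs.
From mathcomp Require Import all_boot all_order all_fingroup all_solvable.
From mathcomp Require Import zify.
Set Implicit Arguments. Unset Strict Implicit. Unset Printing Implicit Defensive.
Local Open Scope group_scope.

Lemma sub_dprod (gT : finGroupType) (F1 F2 E1 E2 G : {group gT}) :
  F1 \x F2 = G -> E1 \subset F1 -> E2 \subset F2 ->
  E1 \x E2 = (E1 <*> E2)%G /\ (E1 <*> E2)%G \subset G.
Proof.
case/dprodP=> _ defG cF tiF s1 s2.
have cE : E2 \subset 'C(E1) by apply: subset_trans (centS s1); apply: subset_trans cF.
split; first apply: dprodEY => //.
  apply/trivgP; rewrite -tiF; exact: setISS.
by rewrite /= join_subG -defG (subset_trans s1 (mulG_subl _ _)) (subset_trans s2 (mulG_subr _ _)).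
Qed.

Lemma sub_bigdprod (gT : finGroupType) I (r : seq I) (P : pred I)
  (F E : I -> {group gT}) (G : {group gT}) :
  \big[dprod/1]_(i <- r | P i) F i = G -> (forall i, P i -> E i \subset F i) ->
  exists2 K : {group gT}, \big[dprod/1]_(i <- r | P i) E i = K & K \subset G.
Proof.
move=> defG sEF; move: G defG.
elim/big_rec2: _ => [|i B1 B2 Pi IH] G defG.
  by exists 1%G => //; rewrite sub1G.
case/dprodP: (defG) => [[Fi Gi eFi eB] _ _ _].
rewrite eB in defG; have [K eK sK] := IH Gi eB.
rewrite eK; rewrite eFi in defG.
have sEi : E i \subset Fi by rewrite -eFi; exact: sEF.
have [d s] := sub_dprod defG sEi sK.
by exists (E i <*> K)%G.
Qed.

Lemma bigdprod_abelian (gT : finGroupType) I (r : seq I) (P : pred I)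
  (F : I -> {group gT}) (G : {group gT}) :
  \big[dprod/1]_(i <- r | P i) F i = G -> (forall i, P i -> abelian (F i)) ->
  abelian G.
Proof.
move=> defG aF; move: G defG.
elim/big_rec: _ => [|i B Pi IH] G defG.
  by rewrite -defG abelian1.
case/dprodP: (defG) => [[Fi Gi eFi eB] defM cG _].
rewrite -defM eFi eB abelianM -eFi aF //=.
by apply/andP; split; [exact: IH eB | rewrite -eB].
Qed.
Lemma part1 (gT : finGroupType) (A H S : {group gT}) :
  H \subset A -> S \subset A -> (forall x, is_square A x = (x \in S)) ->
  subgroup_perfect_code A H <-> (H :=: S \/ exists x, x \in H /\ x \notin S).
Proof.
move=> sHA sSA hS; split.
  move=> [T [sTA sqf [_ pc]]].
  case: (boolP (H \subset S)) => sHS; last first.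
    by right; have /subsetPn [x xH xS] := sHS; exists x.
  left; apply/eqP; rewrite eqEsubset sHS /=; apply/subsetP => v vS.
  apply/negPn/negP => vH.
  have /eqP/cards1P [c ec] := pc v (subsetP sSA v vS).
  have : c \in [set c0 in H | (c0 == v) || cays_adj T v c0] by rewrite ec set11.
  rewrite inE => /andP [cH /orP[/eqP cv | /andP[_ vcT]]].
    by rewrite -cv cH in vH.
  have := (forall_inP sqf) _ vcT; rewrite hS groupM //.
  exact: (subsetP sHS).
move=> hyp.
have exv : forall v, v \in A -> v \notin H -> exists y, (y \in v *: H) && (y \notin S).
  move=> v vA vH; case: hyp => [eHS | [h0 [h0H h0S]]].
    by exists v; rewrite lcoset_refl -eHS vH.
  case: (boolP (v \in S)) => vS; last by exists v; rewrite lcoset_refl.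
  exists (v * h0); rewrite mem_lcoset mulKg h0H /=.
  by rewrite groupMl.
pose pk (C : {set gT}) := odflt 1 [pick y in C | y \notin S].
have pkP : forall v, v \in A -> v \notin H -> (pk (v *: H) \in v *: H) && (pk (v *: H) \notin S).
  move=> v vA vH; have [y /andP[yC yS]] := exv v vA vH.
  rewrite /pk; case: pickP => [z /andP[zC zS] | none] /=; first by rewrite zC zS.
  by have := none y; rewrite yC yS.
pose T := [set x in A | (x \notin H) && (x == pk (x *: H))].
exists T; split.
- by apply/subsetP => x; rewrite inE => /andP[].
- apply/forall_inP => x; rewrite inE => /and3P[xA xH /eqP ex].
  rewrite hS ex; by case/andP: (pkP x xA xH).
split => // v vA; case: (boolP (v \in H)) => vH.
  apply/eqP/cards1P; exists v; apply/setP => c; rewrite !inE.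
  case: (eqVneq c v) => [-> | cv]; first by rewrite vH.
  apply/negbTE; apply/negP => /andP[cH /andP[_]]; rewrite inE => /and3P[_ /negP[]].
  exact: groupM.
have /andP[yC yS] := pkP v vA vH.
set y := pk (v *: H) in yC yS.
have c0H : v^-1 * y \in H by rewrite -mem_lcoset.
apply/eqP/cards1P; exists (v^-1 * y); apply/setP => c; rewrite !inE.
case: (boolP (c \in H)) => cH /=; last first.
  by apply/esym/negbTE; apply: contraNneq cH => ->.
have -> : (c == v) = false by apply: contraNF vH => /eqP <-.
have vc : v != c by apply: contraNneq vH => ->.
rewrite /= /cays_adj vc /= inE (groupM vA (subsetP sHA c cH)) (groupMr _ cH) vH /=.
have -> : (v * c) *: H = v *: H by apply/lcoset_eqP; rewrite mem_lcoset mulKg.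
rewrite -/y; apply/eqP/eqP => [<- | ->]; by rewrite ?mulKg ?mulKVg.
Qed.

Theorem theorem3p1 (gT : finGroupType) (A : {group gT}) (k : nat)
    (m : 'I_k -> nat) (a : 'I_k -> gT) (B : {group gT})
    (hk : (0 < k)%N) (hm : forall i, (0 < m i)%N)
    (ha : forall i, #[a i] = (2 ^ m i)%N)
    (hBab : abelian B) (hB : odd #|B|)
    (hA : (\big[dprod/1]_(i < k) <[a i]>) \x B = A)
    (H : {group gT}) (hH : H \subset A) :
  subgroup_perfect_code A H <->
  ((exists (h : 'I_k -> gT) (K : {group gT}),
       [/\ forall i, #[h i] = (2 ^ (m i).-1)%N,
           K \isog B &
           (\big[dprod/1]_(i < k) <[h i]>) \x K = H])
   \/ exists x, x \in H /\ ~~ is_square A x).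
Proof.
case/dprodP: (hA) => [[P0 B0 eP eB0] defA cPB tiPB].
have defP : \big[dprod/1]_(i < k) <[a i]> = P0 := eP.
have hA2 : P0 \x B = A by rewrite -eP.
have aA : abelian A.
  rewrite -defA eP eB0 abelianM -eB0 hBab -eP cPB andbT.
  rewrite andbT eP; exact: (bigdprod_abelian defP (fun i _ => cycle_abelian (a i))).
have sqM : {in A &, {morph (fun x => x * x) : x y / x * y >-> x * y}}.
  move=> x y xA yA /=.
  have e : y * x = x * y by apply/esym; exact: (centsP aA) x xA y yA.
  by rewrite mulgA -(mulgA x y x) e !mulgA.
pose f := Morphism sqM.
have hS : forall x, is_square A x = (x \in f @* A).
  move=> x; rewrite morphimEdom; apply/existsP/imsetP.
    by move=> [y /andP[yA /eqP ->]]; exists y.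
  by move=> [y yA ->]; exists y; rewrite yA eqxx.
have sSA : f @* A \subset A.
  apply/subsetP => _ /morphimP[x _ xA ->]; exact: groupM.
have aiA : forall i, a i \in A.
  move=> i; rewrite -defA; apply: (subsetP (mulG_subl _ _)).
  rewrite eP -(bigdprodWY defP); apply: mem_gen; apply/bigcupP; exists i => //.
  exact: cycle_id.
have sP0A : P0 \subset A by rewrite -defA -eP mulG_subl.
have fP : \big[cprod/1]_(i < k) <[a i * a i]> = f @* P0.
  rewrite -(morphim_bigcprod f sP0A (bigdprodWcp defP)); apply: eq_bigr => i _.
  by rewrite morphim_cycle.
have sub_sq : forall x : gT, <[x * x]>%G \subset <[x]>%G.
  by move=> x; rewrite /= cycle_subG groupM ?cycle_id.
have [Q0 defQ sQP] := @sub_bigdprod _ _ _ _ (fun i => <[a i]>%G) (fun i => <[a i * a i]>%G) P0 defP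
   (fun i _ => sub_sq (a i)).
have eQ : f @* P0 = Q0 by rewrite -fP (bigdprodWcp defQ).
have fB : f @* B = B.
  apply/eqP; rewrite eqEsubset; apply/andP; split.
    by apply/subsetP => _ /morphimP[x _ xB ->]; exact: groupM.
  have sBA : B \subset A by rewrite -defA eP; exact: mulG_subr.
  apply/subsetP => b bB; apply/morphimP.
  exists (b ^+ (#|B|./2.+1)); rewrite ?groupX ?(subsetP sBA) //=.
  have he : (#|B|./2.+1 + #|B|./2.+1 = #|B|.+1)%N.
    by move: (odd_double_half #|B|); rewrite hB -addnn /=; lia.
  by rewrite -expgD he expgSr expg_cardG // mul1g.
have hcp : Q0 \* B = f @* A.
  by rewrite -eQ -fB; apply: morphim_cprod => //; exact: dprodWcp hA2.
have [dQ _] := sub_dprod hA2 sQP (subxx B).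
have dQS : Q0 \x B = f @* A by rewrite dQ -(dprodWcp dQ) hcp.
have hord : forall i, #[a i * a i] = (2 ^ (m i).-1)%N.
  by move=> i; have := orderXexp 1 (ha i); rewrite expn1 expgS expg1 subn1.
have cardS : #|f @* A| = ((\prod_(i < k) 2 ^ (m i).-1) * #|B|)%N.
  rewrite -(dprod_card dQS) -(bigdprod_card defQ); congr (_ * _)%N.
  by apply: eq_bigr => i _; rewrite -hord.
split.
  move/(part1 hH sSA hS) => [eHS | [x [xH xS]]]; [left | right].
    exists (fun i => a i * a i), B; split => //; first exact: isog_refl.
    by rewrite defQ dQS eHS.
  by exists x; rewrite hS.
case => [[h [K [hh hK dH]]] | [x [xH xS]]]; apply/(part1 hH sSA hS); last first.
  by right; exists x; rewrite -hS.
case: (boolP (H \subset f @* A)) => sHS; last first.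
  by right; case/subsetPn: sHS => x xH xS; exists x.
left; apply/eqP; rewrite eqEcard sHS /= cardS.
case/dprodP: (dH) => [[Hh K' eHh eK'] _ _ _].
rewrite -(dprod_card dH) eHh -(bigdprod_card eHh) (card_isog hK).
by rewrite leq_eqVlt; apply/orP; left; apply/eqP; congr (_ * _)%N; apply: eq_bigr => i _; rewrite -hh.
Qed.
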